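(* Let $(V,c)$ be a network and $\Omega\subset V$ a finite subset of size $n$. Let $(\lambda_i,u_i)_{i=1}^n$ be a Dirichlet system for $\Omega$. Let $\mathcal H$ be a real Hilbert space and $\alpha:V\to\mathcal H$. Then for any $k<n$, $$\sum_{i=1}^k(\lambda_{k+1}-\lambda_i)^2\Big(\langle\Gamma(\alpha),u_i^2\rangle-\Lambda(\alpha,u_i)\Big)\le\sum_{i=1}^k(\lambda_{k+1}-\lambda_i)\,\big\|u_i\cdot\Delta\alpha-2\Gamma(\alpha,u_i)\big\|^2.$$
   Context: A network is a pair $(V,c)$ with $V$ countable and $c:V\times V\to[0,\infty)$ symmetric with $\pi(x):=\sum_y c(x,y)<\infty$. Set $P(x,y)=c(x,y)/\pi(x)$ and, for functions $f$ (real- or $\mathcal H$-valued), $\Delta f(x)=\sum_yP(x,y)(f(x)-f(y))$. For real $u$, $\langle f,g\rangle=\sum_x\pi(x)f(x)g(x)$. For $\alpha:V\to\mathcal H$ and real $u:V\to\mathbb R$ define: $2\Gamma(\alpha,u)(x)=\sum_yP(x,y)(u(x)-u(y))(\alpha(x)-\alpha(y))\in\mathcal H$; $2\Gamma(\alpha)(x)=\sum_yP(x,y)\|\alpha(x)-\alpha(y)\|_{\mathcal H}^2$; $\langle\Gamma(\alpha),u^2\rangle=\sum_x\pi(x)\Gamma(\alpha)(x)u(x)^2$; for $\beta:V\to\mathcal H$, $\|\beta\|^2=\sum_x\pi(x)\|\beta(x)\|_{\mathcal H}^2$; and $\Lambda(\alpha,u)=\frac14\sum_{x,y}c(x,y)|u(x)-u(y)|^2\|\alpha(x)-\alpha(y)\|_{\mathcal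 H}^2$. For finite $\Omega\subset V$ with $|\Omega|=n$, let $\Delta_\Omega f=\mathbf 1_\Omega\cdot\Delta f$ be the Dirichlet Laplacian on the space of functions vanishing outside $\Omega$. A Dirichlet system for $\Omega$ is $(\lambda_i,u_i)_{i=1}^n$ with $\lambda_1\le\cdots\le\lambda_n$ the eigenvalues of $\Delta_\Omega$, $u_i$ real-valued, vanishing outside $\Omega$, $\Delta_\Omega u_i=\lambda_iu_i$, and $\langle u_i,u_j\rangle=\mathbf 1_{i=j}$. *)

(* Defs.v *)
From HB Require Import structures.
From mathcomp Require Import all_boot all_order all_algebra finmap.
From mathcomp Require Import all_classical all_reals all_analysis.
Set Implicit Arguments. Unset Strict Implicit. Unset Printing Implicit Defensive.
Import Order.TTheory GRing.Theory Num.Theory.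
Import numFieldNormedType.Exports.
Local Open Scope classical_set_scope.
Local Open Scope ring_scope.

(* the net of finite sub-sums, indexed by finite subsets ordered by inclusion *)
Definition totally {I : choiceType} : set_system {fset I} :=
  filter_from setT (fun A => [set B | (A `<=` B)%fset]).

Definition psum {I : choiceType} {W : zmodType} (F : I -> W) (A : {fset I}) : W :=
  \sum_(i <- A) F i.

Definition hasSum {I : choiceType} {R : numFieldType} {W : normedModType R}
  (F : I -> W) (s : W) : Prop := psum F @ totally --> s.

(* the sum  \sum_i F i  (meaningful when F is summable) *)
Definition vsum {I : choiceType} {R : numFieldType} {W : normedModType R}
  (F : I -> W) : W := lim (psum F @ totally).

Section Network.
Variables (R : realType) (V : countType) (c : V -> V -> R).

Definition pi (x : V) : R := vsum (c x).
Definition is_network : Prop :=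
  [/\ forall x y, 0 <= c x y, forall x y, c x y = c y x,
      forall x, exists s, hasSum (c x) s & forall x, 0 < pi x].

Definition P (x y : V) : R := c x y / pi x.

Definition lap {W : normedModType R} (f : V -> W) (x : V) : W :=
  vsum (fun y => P x y *: (f x - f y)).

(* Dirichlet Laplacian on functions vanishing outside Omega *)
Definition lapD (Om : {fset V}) (f : V -> R) (x : V) : R :=
  if x \in Om then lap f x else 0.

Definition ipi (f g : V -> R) : R := vsum (fun x => pi x * f x * g x).

Variable (H : normedModType R).

Definition GammaAU (alpha : V -> H) (u : V -> R) (x : V) : H :=
  2^-1 *: vsum (fun y => (P x y * (u x - u y)) *: (alpha x - alpha y)).

Definition GammaA (alpha : V -> H) (x : V) : R :=
  2^-1 * vsum (fun y => P x y * `|alpha x - alpha y| ^+ 2).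

Definition GammaA_u2 (alpha : V -> H) (u : V -> R) : R :=
  vsum (fun x => pi x * GammaA alpha x * u x ^+ 2).

Definition normsq (beta : V -> H) : R := vsum (fun x => pi x * `|beta x| ^+ 2).

Definition Lambda (alpha : V -> H) (u : V -> R) : R :=
  4^-1 * vsum (fun xy : V * V =>
     c xy.1 xy.2 * `|u xy.1 - u xy.2| ^+ 2 * `|alpha xy.1 - alpha xy.2| ^+ 2).

End Network.

(* ip is an inner product on H inducing its norm (so a complete H is a real
   Hilbert space) *)
Definition inner_product_for {R : realType} {H : normedModType R}
  (ip : H -> H -> R) : Prop :=
  [/\ forall x y, ip x y = ip y x,
      forall (a : R) x y z, ip (a *: x + y) z = a * ip x z + ip y z
    & forall x, ip x x = `|x| ^+ 2].

(* Main.v *)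
Require Import Defs.
From HB Require Import structures.
From mathcomp Require Import all_boot all_order all_algebra finmap.
From mathcomp Require Import all_classical all_reals all_analysis.
From mathcomp Require Import lra ring.
Import Order.TTheory GRing.Theory Num.Theory.
Import numFieldNormedType.Exports.
Local Open Scope classical_set_scope.
Local Open Scope ring_scope.
Set Implicit Arguments. Unset Strict Implicit.

Lemma totally_proper (I : choiceType) : ProperFilter (@totally I).
Proof.
apply: filter_from_proper; last by move=> A _; exists A => /=.
apply: filter_fromT_filter; first by exists fset0.
by move=> A B; exists (A `|` B)%fset => C /= HC; split;
  apply: fsubset_trans HC; rewrite ?fsubsetUl ?fsubsetUr.
Qed.
#[global] Existing Instance totally_proper.

Lemma nearTP (I : choiceType) (Q : {fset I} -> Prop) :
  (\forall B \near totally, Q B) <-> exists A, forall B, (A `<=` B)%fset -> Q B.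
Proof.
split; first by case=> A _ HA; exists A => B HB; apply: HA.
by case=> A HA; exists A.
Qed.

Lemma nearTPf (I : choiceType) (T : Type) (f : {fset I} -> T) (Q : T -> Prop) :
  (\forall x \near (f @ totally)%classic, Q x) <-> exists A, forall B, (A `<=` B)%fset -> Q (f B).
Proof. exact: (nearTP (fun B => Q (f B))). Qed.

Lemma hasSum_vsum (I : choiceType) (R : realType) (W : normedModType R)
  (F : I -> W) s : hasSum F s -> vsum F = s.
Proof. by move=> h; apply: cvg_lim. Qed.

Lemma hasSumD (I : choiceType) (R : realType) (W : normedModType R)
  (F G : I -> W) a b : hasSum F a -> hasSum G b -> hasSum (fun i => F i + G i) (a + b).
Proof.
move=> hF hG; have := cvgD hF hG.
have -> : (psum F + psum G) = psum (fun i => F i + G i).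
  by apply: funext => A; rewrite /psum /= big_split.
exact.
Qed.

Lemma hasSumZ (I : choiceType) (R : realType) (W : normedModType R)
  (F : I -> W) a (k : R) : hasSum F a -> hasSum (fun i => k *: F i) (k *: a).
Proof.
move=> hF; have := cvgZl_tmp (k:=k) hF.
have -> : (k \*: psum F) = psum (fun i => k *: F i).
  by apply: funext => A; rewrite /psum /= scaler_sumr.
exact.
Qed.

Lemma hasSum_ext (I : choiceType) (R : realType) (W : normedModType R)
  (F G : I -> W) a : (forall i, F i = G i) -> hasSum F a -> hasSum G a.
Proof. by move=> e; have -> : F = G by apply: funext. Qed.

Lemma hasSum_fin (I : choiceType) (R : realType) (W : normedModType R)
  (F : I -> W) (A : {fset I}) : (forall i, i \notin A -> F i = 0) ->
  hasSum F (\sum_(i <- A) F i).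
Proof.
move=> h; apply: cvg_near_cst; apply/nearTP; exists A => B AB.
rewrite /psum; apply/esym/big_fset_incl => // x _; exact: h.
Qed.

Lemma hasSum0 (I : choiceType) (R : realType) (W : normedModType R) :
  hasSum (fun _ : I => (0 : W)) 0.
Proof.
have := @hasSum_fin I R W (fun _ => 0) fset0 (fun _ _ => erefl).
by rewrite big_seq_fset0.
Qed.

Lemma hasSum_sum (J : eqType) (I : choiceType) (R : realType) (W : normedModType R)
  (s : seq J) (F : J -> I -> W) (S : J -> W) :
  (forall a, a \in s -> hasSum (F a) (S a)) ->
  hasSum (fun i => \sum_(a <- s) F a i) (\sum_(a <- s) S a).
Proof.
elim: s => [|a s IH] h.
  by rewrite big_nil; apply: hasSum_ext (@hasSum0 I R W) => i; rewrite big_nil.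
rewrite big_cons.
have ha : hasSum (F a) (S a) by apply: h; rewrite mem_head.
have hs : hasSum (fun i => \sum_(a0 <- s) F a0 i) (\sum_(a0 <- s) S a0).
  by apply: IH => b bs; apply: h; rewrite in_cons bs orbT.
by apply: hasSum_ext (hasSumD ha hs) => i; rewrite big_cons.
Qed.

Lemma psum_sub (I : choiceType) (R : realType) (W : normedModType R)
  (F : I -> W) (A B : {fset I}) : (A `<=` B)%fset ->
  psum F B = psum F A + \sum_(i <- B | i \notin A) F i.
Proof.
move=> AB; rewrite /psum (bigID (fun i => i \in A)) /=; congr (_ + _).
rewrite -big_filter; apply: perm_big; apply: uniq_perm.
- by apply: filter_uniq; apply: fset_uniq.
- exact: fset_uniq.
move=> x; rewrite mem_filter; apply/andP/idP => [[]//|xA]; split => //.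
exact: (fsubsetP AB).
Qed.

Lemma hasSum_le (I : choiceType) (R : realType) (F : I -> R) s (A : {fset I}) :
  (forall i, 0 <= F i) -> hasSum F s -> psum F A <= s.
Proof.
move=> F0 hF; have := (@closed_cvg _ R totally _ (fun B : {fset I} => psum F B) (fun r => psum F A <= r) (@closed_ge R (psum F A)) _ s hF); apply. 
apply/nearTP; exists A => B AB /=; rewrite (psum_sub F AB) lerDl.
by apply: sumr_ge0 => i _.
Qed.

Lemma hasSum_cmp (I : choiceType) (R : realType) (W : completeNormedModType R)
  (F : I -> W) (G : I -> R) s :
  (forall i, `|F i| <= G i) -> hasSum G s -> exists t, hasSum F t.
Proof.
move=> FG hG.
have : cvg (psum F @ totally).
  apply: cauchy_cvg; apply: cauchy_exP => e e0.
  have e2 : 0 < e / 2 by rewrite divr_gt0.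
  have := cvgr_dist_lt _ _ hG (e/2) e2.
  move=> /(_ _) /nearTP [A hA]; exists (psum F A); apply/nearTPf; exists A => B AB.
  rewrite /= -ball_normE /ball_ /= (psum_sub F AB) opprD addrA subrr sub0r normrN.
  apply: (le_lt_trans (ler_norm_sum _ _ _)).
  apply: (@le_lt_trans _ _ (\sum_(i <- B | i \notin A) G i)); first by apply: ler_sum.
  have := hA B AB; have := hA A (fsubset_refl A); rewrite (psum_sub G AB).
  set x := \sum_(_ <- _ | _) _; move=> h1 h2.
  move: h1 h2; rewrite !ltr_norml => /andP[h1 h1'] /andP[h2 h2'].
  lra.
by move=> h; exists (lim (psum F @ totally)).
Qed.

Lemma sum_pmap (I J : eqType) (W : zmodType) (F : I -> W) (G : J -> W)
  (e : I -> J) (d : J -> option I) (t : seq J) :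
  (forall j i, d j = Some i -> j = e i) -> (forall j, d j = None -> G j = 0) ->
  (forall i, G (e i) = F i) ->
  \sum_(j <- t) G j = \sum_(i <- pmap d t) F i.
Proof.
move=> de dN Ge; elim: t => [|j t IH]; first by rewrite !big_nil.
rewrite big_cons /=; case E: (d j) => [i|].
  by rewrite big_cons (de _ _ E) Ge IH.
by rewrite (dN _ E) add0r IH.
Qed.

Lemma hasSum_reindex (I J : choiceType) (R : realType) (W : normedModType R)
  (F : I -> W) (G : J -> W) (e : I -> J) (d : J -> option I) s :
  (forall i, d (e i) = Some i) -> (forall j i, d j = Some i -> j = e i) ->
  (forall j, d j = None -> G j = 0) -> (forall i, G (e i) = F i) ->
  hasSum F s -> hasSum G s.
Proof.
move=> ed de dN Ge hF; apply/cvgrPdist_lt => eps e0.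
have := cvgr_dist_lt _ _ hF eps e0 => /(_ _) /nearTP [A hA].
apply/nearTP; exists [fset e i | i in A]%fset => B' AB'.
have -> : psum G B' = psum F (seq_fset tt (pmap d B')).
  rewrite /psum (sum_pmap _ de dN Ge); apply: perm_big; apply: uniq_perm.
  - apply: (pmap_uniq (g := e)); last exact: fset_uniq.
    by move=> j /=; case E: (d j) => [i|] //=; rewrite (de _ _ E).
  - exact: fset_uniq.
  - by move=> x; rewrite seq_fsetE.
apply: hA; apply/fsubsetP => i iA; rewrite seq_fsetE mem_pmap -(ed i).
apply: map_f; apply: (fsubsetP AB'); exact: in_imfset.
Qed.
Arguments hasSumZ {I R W F a} k.
Arguments hasSum_fin {I R W} F A.
Arguments hasSum_le {I R F s} A.

Unset Implicit Arguments. Set Strict Implicit.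
Notation piN := Defs.pi.
Notation PN := Defs.P.

Lemma net_pi {R : realType} {V : countType} {c : V -> V -> R} :
  is_network c -> forall x, hasSum (c x) (piN c x).
Proof.
case=> _ _ hs _ x; have [s hx] := hs x.
by rewrite /Defs.pi (hasSum_vsum hx).
Qed.

Lemma net_P1 {R : realType} {V : countType} {c : V -> V -> R} :
  is_network c -> forall x, hasSum (PN c x) 1.
Proof.
move=> hn x; have := hasSumZ (piN c x)^-1 (net_pi hn x).
have pi0 : piN c x != 0 by case: hn => _ _ _ /(_ x) h; rewrite gt_eqF.
rewrite /GRing.scale /= mulVf //; apply: hasSum_ext => y.
by rewrite /Defs.P mulrC.
Qed.

Lemma net_c_le {R : realType} {V : countType} {c : V -> V -> R} :
  is_network c -> forall x y, c x y <= piN c x.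
Proof.
move=> hn x y; have := hasSum_le [fset y]%fset _ (net_pi hn x).
rewrite /psum big_seq_fset1; apply; by case: hn.
Qed.

Lemma net_P_ge0 {R : realType} {V : countType} {c : V -> V -> R} :
  is_network c -> forall x y, 0 <= PN c x y.
Proof.
move=> hn x y; case: (hn) => c0 _ _ /(_ x) h.
by rewrite /Defs.P divr_ge0 // ltW.
Qed.

Lemma net_P_le1 {R : realType} {V : countType} {c : V -> V -> R} :
  is_network c -> forall x y, PN c x y <= 1.
Proof.
move=> hn x y; case: (hn) => c0 _ _ /(_ x) h.
by rewrite /Defs.P ler_pdivrMr // mul1r (net_c_le hn).
Qed.

Lemma net_sumP_le1 {R : realType} {V : countType} {c : V -> V -> R} (A : {fset V}) :
  is_network c -> forall x, \sum_(y <- A) PN c x y <= 1.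
Proof.
move=> hn x; have := hasSum_le A _ (net_P1 hn x); apply => y.
exact: net_P_ge0.
Qed.

Lemma net_lap_fin {R : realType} {V : countType} {c : V -> V -> R} (A : {fset V})
  (f : V -> R) : is_network c -> (forall y, y \notin A -> f y = 0) ->
  forall x, lap c f x = f x - \sum_(y <- A) PN c x y * f y.
Proof.
move=> hn fA x; apply: hasSum_vsum.
have h1 := hasSumZ (f x) (net_P1 hn x).
have h0 : forall y, y \notin A -> PN c x y * f y = 0 by move=> y yA; rewrite fA // mulr0.
have h2 := hasSumZ (-1) (hasSum_fin (fun y => PN c x y * f y) A h0).
have := hasSumD h1 h2; rewrite /GRing.scale /= mulr1 mulN1r.
by apply: hasSum_ext => y; rewrite mulN1r /GRing.scale /= mulrBr mulrC.
Qed.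

Lemma sumr_cst_seq (R : realFieldType) (T : Type) (s : seq T) (a : R) :
  \sum_(y <- s) a = (size s)%:R * a.
Proof. elim: s => [|b s IH]; first by rewrite big_nil mul0r.
by rewrite big_cons IH /= -add1n natrD mulrDl mul1r. Qed.

Lemma sq_sum_le (R : realFieldType) (T : Type) (s : seq T) (z : T -> R) :
  (\sum_(y <- s) z y) ^+ 2 <= (size s)%:R * \sum_(y <- s) z y ^+ 2.
Proof.
rewrite expr2 mulr_suml.
apply: (@le_trans _ _ (\sum_(y <- s) \sum_(w <- s) ((z y ^+ 2 + z w ^+ 2) / 2))).
  apply: ler_sum => y _; rewrite mulr_sumr; apply: ler_sum => w _.
  have := sqr_ge0 (z y - z w); rewrite sqrrB; lra.
under eq_bigr => y _ do rewrite -mulr_suml big_split /= sumr_cst_seq.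
rewrite -mulr_suml big_split /= sumr_cst_seq -mulr_sumr; lra.
Qed.


Definition betaF {R : realType} {V : countType} (c : V -> V -> R) (Om : {fset V})
  {H : normedModType R} (alpha : V -> H) (u : V -> R) (x : V) : H :=
  \sum_(y <- Om) (PN c x y * u y) *: (alpha x - alpha y).

Lemma lapH_ex {R : realType} {V : countType} {c : V -> V -> R}
  {H : completeNormedModType R} (alpha : V -> H) (x : V) :
  is_network c ->
  (exists s : R, hasSum (fun y => c x y * `|alpha x - alpha y| ^+ 2) s) ->
  exists L, hasSum (fun y => PN c x y *: (alpha x - alpha y)) L.
Proof.
move=> hn [s hs].
have hpi : 0 < piN c x by case: hn => _ _ _; apply.
have h2 := hasSumD (net_P1 hn x) (hasSumZ (piN c x)^-1 hs).
apply: (hasSum_cmp _ h2) => y /=.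
rewrite normrZ ger0_norm ?(net_P_ge0 hn) // /GRing.scale /= mulrA.
have -> : (piN c x)^-1 * c x y = PN c x y by rewrite /Defs.P mulrC.
have := net_P_ge0 hn x y; set p := PN c x y; set t := `|_|.
have : 0 <= t by apply: normr_ge0.
move=> t0 p0; have h : t <= 1 + t ^+ 2 by nra.
by have := ler_wpM2l p0 h; rewrite mulrDr mulr1.
Qed.

Lemma GammaAU_eq {R : realType} {V : countType} {c : V -> V -> R} (Om : {fset V})
  {H : completeNormedModType R} (alpha : V -> H) (u : V -> R) :
  is_network c ->
  (forall x, x \notin Om -> u x = 0) ->
  (forall x, x \in Om -> exists s : R,
       hasSum (fun y => c x y * `|alpha x - alpha y| ^+ 2) s) ->
  forall x, u x *: lap c alpha x - 2 *: GammaAU c alpha u x = betaF c Om alpha u x.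
Proof.
move=> hn uOm hG x.
have hfin : forall y, y \notin Om -> (PN c x y * u y) *: (alpha x - alpha y) = 0.
  by move=> y yO; rewrite uOm // mulr0 scale0r.
have hB := hasSum_fin _ Om hfin.
have two : (2 : R) != 0 by rewrite pnatr_eq0.
rewrite /GammaAU scalerA mulfV // scale1r.
case xO: (x \in Om).
  have [L hL] := lapH_ex alpha x hn (hG x xO).
  rewrite /lap (hasSum_vsum hL).
  have := hasSumD (hasSumZ (u x) hL) (hasSumZ (-1) hB).
  move=> /hasSum_ext h.
  rewrite (hasSum_vsum (h (fun y => (PN c x y * (u x - u y)) *: (alpha x - alpha y)) _)); last first.
    move=> y /=; rewrite scaleN1r scalerA -scalerBl.
    by congr (_ *: _); rewrite mulrBr mulrC.
  by rewrite scaleN1r opprD addrA subrr sub0r opprK.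
have ux : u x = 0 by apply: uOm; rewrite xO.
have := hasSumZ (-1) hB; move=> /hasSum_ext h.
rewrite (hasSum_vsum (h (fun y => (PN c x y * (u x - u y)) *: (alpha x - alpha y)) _)).
  by rewrite ux scale0r sub0r scaleN1r opprK.
by move=> y /=; rewrite ux sub0r mulrN scaleN1r scaleNr.
Qed.

Lemma hasSum_vsumE {I : choiceType} {R : realType} {W : normedModType R} {F : I -> W} {s : W} :
  hasSum F s -> hasSum F (vsum F).
Proof. by move=> h; rewrite (hasSum_vsum h). Qed.

Lemma normsq_ge {R : realType} {V : countType} {c : V -> V -> R} (Om : {fset V})
  {H : completeNormedModType R} (alpha : V -> H) (u : V -> R) :
  is_network c ->
  (forall x, x \notin Om -> u x = 0) ->
  (forall x, x \in Om -> exists s : R,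
       hasSum (fun y => c x y * `|alpha x - alpha y| ^+ 2) s) ->
  \sum_(x <- Om) piN c x * `|betaF c Om alpha u x| ^+ 2 <=
  normsq c (fun x => u x *: lap c alpha x - 2 *: GammaAU c alpha u x).
Proof.
move=> hn uOm hG.
have -> : (fun x => u x *: lap c alpha x - 2 *: GammaAU c alpha u x) = betaF c Om alpha u.
  by apply: funext => x; apply: GammaAU_eq.
have pi0 : forall x, 0 < piN c x by case: hn.
have csym : forall x y, c x y = c y x by case: hn.
have c0 : forall x y, 0 <= c x y by case: hn.
set Fy := fun y x => u y ^+ 2 * (c y x * `|alpha y - alpha x| ^+ 2).
have hD : hasSum (fun x => \sum_(y <- Om) Fy y x)
    (\sum_(y <- Om) u y ^+ 2 * vsum (fun x => c y x * `|alpha y - alpha x| ^+ 2)).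
  apply: hasSum_sum => y yO; have [s hs] := hG y yO.
  have h := hasSumZ (u y ^+ 2) (hasSum_vsumE hs).
  by apply: hasSum_ext h => i.
have hD2 := hasSumZ (size Om)%:R hD.
have [t ht] : exists t, hasSum (fun x => piN c x * `|betaF c Om alpha u x| ^+ 2) t.
  apply: (hasSum_cmp _ hD2) => x /=.
  rewrite ger0_norm; last by apply: mulr_ge0; [exact: ltW | exact: sqr_ge0].
  rewrite /GRing.scale /=.
  set z := fun y => PN c x y * `|u y| * `|alpha x - alpha y|.
  have hb : `|betaF c Om alpha u x| <= \sum_(y <- Om) z y.
    apply: (le_trans (ler_norm_sum _ _ _)); apply: ler_sum => y _.
    by rewrite /z normrZ normrM (ger0_norm (net_P_ge0 hn x y)).
  have hb2 : `|betaF c Om alpha u x| ^+ 2 <= (\sum_(y <- Om) z y) ^+ 2.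
    have := normr_ge0 (betaF c Om alpha u x); nra.
  have hb3 := le_trans hb2 (@sq_sum_le R V Om z).
  apply: (le_trans (ler_wpM2l (ltW (pi0 x)) hb3)).
  rewrite mulrA (mulrC (piN c x)) -mulrA mulr_sumr.
  apply: ler_wpM2l; first by apply: ler0n.
  apply: ler_sum => y _; rewrite /z /Fy.
  have hP : piN c x * PN c x y = c x y.
    by rewrite /Defs.P mulrC -mulrA mulVf ?mulr1 // gt_eqF.
  rewrite (csym y x) (distrC (alpha y)).
  have e : piN c x * (PN c x y * `|u y| * `|alpha x - alpha y|) ^+ 2 =
     c x y * PN c x y * (u y ^+ 2 * `|alpha x - alpha y| ^+ 2).
    rewrite /Defs.P !exprMn real_normK ?num_real //; field; by rewrite gt_eqF.
  rewrite e.
  have := net_P_le1 hn x y; have := net_P_ge0 hn x y; have := c0 x y.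
  have := sqr_ge0 (u y); have : 0 <= `|alpha x - alpha y| ^+ 2 by apply: sqr_ge0.
  set A := `|alpha x - alpha y| ^+ 2; set B := u y ^+ 2; set C := c x y;
  set p := PN c x y; move=> hA hB hC hp hp1.
  have hBA : 0 <= B * A by apply: mulr_ge0.
  have hCBA : 0 <= C * (B * A) by apply: mulr_ge0.
  nra.
rewrite /normsq (hasSum_vsum ht).
apply: (hasSum_le Om _ ht) => x; apply: mulr_ge0; [exact: ltW | exact: sqr_ge0].
Qed.


Lemma hasSum_row {I : choiceType} {R : realType} {W : normedModType R}
  (a : I) {F : I -> W} {s : W} :
  hasSum F s -> hasSum (fun p : I * I => if p.1 == a then F p.2 else 0) s.
Proof.
apply: (hasSum_reindex (e := fun y => (a, y))
  (d := fun p : I * I => if p.1 == a then Some p.2 else None)).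
- by move=> i /=; rewrite eqxx.
- by move=> [x y] i /=; case: eqP => // -> [] ->.
- by move=> [x y] /=; case: eqP.
- by move=> i /=; rewrite eqxx.
Qed.

Lemma hasSum_col {I : choiceType} {R : realType} {W : normedModType R}
  (a : I) {F : I -> W} {s : W} :
  hasSum F s -> hasSum (fun p : I * I => if p.2 == a then F p.1 else 0) s.
Proof.
apply: (hasSum_reindex (e := fun y => (y, a))
  (d := fun p : I * I => if p.2 == a then Some p.1 else None)).
- by move=> i /=; rewrite eqxx.
- by move=> [x y] i /=; case: eqP => // -> [] ->.
- by move=> [x y] /=; case: eqP.
- by move=> i /=; rewrite eqxx.
Qed.

Lemma sum_if_eq {T : eqType} {W : zmodType} (s : seq T) (g : T -> W) (x : T) :
  uniq s -> (x \notin s -> g x = 0) ->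
  \sum_(a <- s) (if x == a then g a else 0) = g x.
Proof.
move=> us gx; case xs: (x \in s).
  rewrite (bigD1_seq x) //= eqxx big1 ?addr0 // => a ax.
  by rewrite eq_sym (negbTE ax).
rewrite big1_seq ?gx ?xs // => a /= ais; case: eqP => // xa.
by move: xs; rewrite xa ais.
Qed.

Lemma GammaA_u2_eq {R : realType} {V : countType} {c : V -> V -> R} (Om : {fset V})
  {H : normedModType R} (alpha : V -> H) (u : V -> R) :
  is_network c ->
  (forall x, x \notin Om -> u x = 0) ->
  (forall x, x \in Om -> exists s : R,
       hasSum (fun y => c x y * `|alpha x - alpha y| ^+ 2) s) ->
  GammaA_u2 c alpha u = 2^-1 * \sum_(x <- Om) u x ^+ 2 *
     vsum (fun y => c x y * `|alpha x - alpha y| ^+ 2).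
Proof.
move=> hn uOm hG.
have pi0 : forall x, 0 < piN c x by case: hn.
rewrite /GammaA_u2 (hasSum_vsum (hasSum_fin _ Om _)); last first.
  by move=> x xO; rewrite uOm // expr0n /= mulr0.
rewrite mulr_sumr; apply: eq_big_seq => x xO.
have [s hs] := hG x xO.
rewrite /GammaA.
have h := hasSumZ (piN c x)^-1 hs.
rewrite (hasSum_vsum hs) (hasSum_vsum (F := fun y => PN c x y * `|alpha x - alpha y| ^+ 2) (s := (piN c x)^-1 * s)).
  by field; rewrite gt_eqF.
rewrite /GRing.scale /= in h; apply: hasSum_ext h => y.
by rewrite /Defs.P mulrA (mulrC (piN c x)^-1).
Qed.

Lemma Lambda_eq {R : realType} {V : countType} {c : V -> V -> R} (Om : {fset V})
  {H : normedModType R} (alpha : V -> H) (u : V -> R) :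
  is_network c ->
  (forall x, x \notin Om -> u x = 0) ->
  (forall x, x \in Om -> exists s : R,
       hasSum (fun y => c x y * `|alpha x - alpha y| ^+ 2) s) ->
  Lambda c alpha u = 4^-1 * \sum_(a <- Om)
     (2 * (u a ^+ 2 * vsum (fun y => c a y * `|alpha a - alpha y| ^+ 2)) -
      2 * \sum_(y <- Om) u a * c a y * u y * `|alpha a - alpha y| ^+ 2).
Proof.
move=> hn uOm hG.
have csym : forall x y, c x y = c y x by case: hn.
set D := fun x y => `|alpha x - alpha y| ^+ 2.
set Fa := fun a y => u a ^+ 2 * (c a y * D a y).
set Ga := fun a y => u a * c a y * u y * D a y.
set L := fun (a : V) (p : V * V) =>
  (if p.1 == a then Fa a p.2 else 0) + (if p.2 == a then Fa a p.1 else 0) +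
  (-2) * (if p.1 == a then Ga a p.2 else 0).
have hL : hasSum (fun p => \sum_(a <- Om) L a p) (\sum_(a <- Om)
     (2 * (u a ^+ 2 * vsum (fun y => c a y * D a y)) -
      2 * \sum_(y <- Om) u a * c a y * u y * D a y)).
  apply: hasSum_sum => a aO.
  have [s hs] := hG a aO.
  have hF : hasSum (Fa a) (u a ^+ 2 * vsum (fun y => c a y * D a y)).
    have h := hasSumZ (u a ^+ 2) hs; rewrite (hasSum_vsum hs).
    by apply: hasSum_ext h => y.
  have hGa : hasSum (Ga a) (\sum_(y <- Om) u a * c a y * u y * D a y).
    by apply: hasSum_fin => y yO; rewrite /Ga (uOm y yO) mulr0 mul0r.
  have := hasSumD (hasSumD (hasSum_row a hF) (hasSum_col a hF))
     (hasSumZ (-2) (hasSum_row a hGa)).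
  move=> /hasSum_ext h.
  have -> : 2 * (u a ^+ 2 * vsum (fun y => c a y * D a y)) -
      2 * \sum_(y <- Om) u a * c a y * u y * D a y =
    u a ^+ 2 * vsum (fun y => c a y * D a y) + u a ^+ 2 * vsum (fun y => c a y * D a y)
    + (-2) *: \sum_(y <- Om) u a * c a y * u y * D a y.
    by rewrite /GRing.scale /=; ring.
  by apply: h => p.
rewrite /Lambda (hasSum_vsum (hasSum_ext _ hL)) // => -[x y] /=.
rewrite /L !big_split /= -mulr_sumr !sum_if_eq ?fset_uniq //.
- rewrite /Fa /Ga /D (csym y x) (distrC (alpha y)) real_normK ?num_real //.
  ring.
- by move=> xO; rewrite /Ga uOm // !mul0r.
- by move=> yO; rewrite /Fa uOm // expr0n /= mul0r.
- by move=> xO; rewrite /Fa uOm // expr0n /= mul0r.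
Qed.


Lemma sum_ord_fset {R : realType} {V : choiceType} (Om : {fset V}) (x0 : V) (F : V -> R) :
  \sum_(m < #|` Om|) F (nth x0 Om m) = \sum_(x <- Om) F x.
Proof. by rewrite (big_nth x0) big_mkord. Qed.

Lemma complete_basis {R : realType} {V : choiceType} (Om : {fset V}) (n : nat)
  (w : V -> R) (u : 'I_n -> V -> R) :
  #|` Om| = n ->
  (forall i j, \sum_(x <- Om) w x * u i x * u j x = (i == j)%:R) ->
  forall x y, x \in Om -> y \in Om -> \sum_(j < n) w x * u j x * u j y = (x == y)%:R.
Proof.
move=> hn; subst n => horth x y xO yO.
pose A : 'M[R]_#|` Om| := \matrix_(i, m) u i (nth x Om m).
pose B : 'M[R]_#|` Om| := \matrix_(m, j) (w (nth x Om m) * u j (nth x Om m)).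
have AB : A *m B = 1%:M.
  apply/matrixP => i j; rewrite !mxE -(horth i j) -(sum_ord_fset Om x).
  by apply: eq_bigr => m _; rewrite !mxE mulrA (mulrC (u i _)).
have /matrixP BA := mulmx1C AB.
have xi : (index x Om < #|` Om|)%N by rewrite index_mem.
have yi : (index y Om < #|` Om|)%N by rewrite index_mem.
have := BA (Ordinal xi) (Ordinal yi); rewrite !mxE /= => h.
have -> : (x == y) = (Ordinal xi == Ordinal yi).
  apply/eqP/eqP => [e|/(congr1 val) /= /(congr1 (nth x Om))].
    by apply: val_inj => /=; rewrite e.
  by rewrite !nth_index.
rewrite -h; apply: eq_bigr => j _; rewrite !mxE /= !nth_index //.
Qed.

Lemma ipDl {R : realType} {H : normedModType R} {ip : H -> H -> R} :
  inner_product_for ip -> forall x y z, ip (x + y) z = ip x z + ip y z.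
Proof. by case=> _ hl _ x y z; rewrite -{1}(scale1r x) hl mul1r. Qed.

Lemma ip0l {R : realType} {H : normedModType R} {ip : H -> H -> R} :
  inner_product_for ip -> forall z, ip 0 z = 0.
Proof.
move=> hip z; have := ipDl hip 0 0 z; rewrite addr0; lra.
Qed.

Lemma ipZl {R : realType} {H : normedModType R} {ip : H -> H -> R} :
  inner_product_for ip -> forall a x z, ip (a *: x) z = a * ip x z.
Proof. by move=> hip a x z; case: (hip) => _ hl _; rewrite -(addr0 (a *: x)) hl ip0l // addr0. Qed.

Lemma ip_suml {R : realType} {H : normedModType R} {ip : H -> H -> R} {I : Type} :
  inner_product_for ip -> forall (s : seq I) (a : I -> R) (f : I -> H) z,
  ip (\sum_(i <- s) a i *: f i) z = \sum_(i <- s) a i * ip (f i) z.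
Proof.
move=> hip s a f z; elim: s => [|i s IH]; first by rewrite !big_nil ip0l.
by rewrite !big_cons ipDl // ipZl // IH.
Qed.

Lemma ip_sumr {R : realType} {H : normedModType R} {ip : H -> H -> R} {I : Type} :
  inner_product_for ip -> forall (s : seq I) (a : I -> R) (f : I -> H) z,
  ip z (\sum_(i <- s) a i *: f i) = \sum_(i <- s) a i * ip z (f i).
Proof.
move=> hip s a f z; case: (hip) => hs _ _; rewrite hs ip_suml //.
by apply: eq_bigr => i _; rewrite hs.
Qed.

Lemma parseval {R : realType} {V : choiceType} {H : normedModType R}
  {ip : H -> H -> R} (Om : {fset V}) (n : nat) (w : V -> R) (u : 'I_n -> V -> R)
  (f g : V -> H) :
  inner_product_for ip ->
  (forall x y, x \in Om -> y \in Om -> \sum_(j < n) w x * u j x * u j y = (x == y)%:R) ->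
  \sum_(x <- Om) w x * ip (f x) (g x) =
  \sum_(j < n) ip (\sum_(x <- Om) (w x * u j x) *: f x)
                  (\sum_(y <- Om) (w y * u j y) *: g y).
Proof.
move=> hip hc; apply/esym.
under eq_bigr => j _ do rewrite (ip_suml hip).
under eq_bigr => j _ do under eq_bigr => x _ do rewrite (ip_sumr hip) mulr_sumr.
rewrite exchange_big /=; apply: eq_big_seq => x xO.
rewrite exchange_big /= (bigD1_seq x) ?fset_uniq //= [X in _ + X]big1_seq ?addr0.
  have h1 : \sum_(j < n) w x * u j x * u j x = 1 by rewrite hc // eqxx.
  rewrite -[RHS]mul1r -h1 mulr_suml; apply: eq_bigr => j _; ring.
move=> y /andP[yx yO].
have h0 : \sum_(j < n) w y * u j y * u j x = 0 by rewrite hc // (negbTE yx).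
rewrite [RHS](_ : 0 = (\sum_(j < n) w y * u j y * u j x) * (w x * ip (f x) (g y))); last by rewrite h0 mul0r.
rewrite mulr_suml; apply: eq_bigr => j _; ring.
Qed.


Lemma coefB_net {R : realType} {V : countType} (c : V -> V -> R) (Om : {fset V})
  {H : normedModType R} (alpha : V -> H) (li lj : R) (ui uj : V -> R) :
  (forall x y, c x y = c y x) ->
  (forall x y, piN c x * PN c x y = c x y) ->
  (forall x, x \in Om -> li * ui x = ui x - \sum_(y <- Om) PN c x y * ui y) ->
  (forall x, x \in Om -> lj * uj x = uj x - \sum_(y <- Om) PN c x y * uj y) ->
  \sum_(x <- Om) (piN c x * uj x) *: betaF c Om alpha ui x =
  (lj - li) *: \sum_(x <- Om) (piN c x * ui x * uj x) *: alpha x.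
Proof.
move=> csym hP ei ej.
have -> : \sum_(x <- Om) (piN c x * uj x) *: betaF c Om alpha ui x =
   \sum_(x <- Om) \sum_(y <- Om) (c x y * uj x * ui y) *: alpha x -
   \sum_(x <- Om) \sum_(y <- Om) (c x y * uj x * ui y) *: alpha y.
  rewrite -sumrB; apply: eq_bigr => x _; rewrite /betaF scaler_sumr -sumrB.
  apply: eq_bigr => y _; rewrite scalerA -scalerBr; congr (_ *: _).
  by rewrite -hP; ring.
have -> : (lj - li) *: \sum_(x <- Om) (piN c x * ui x * uj x) *: alpha x =
   \sum_(x <- Om) \sum_(y <- Om) (c x y * uj x * ui y) *: alpha x -
   \sum_(x <- Om) \sum_(y <- Om) (c x y * ui x * uj y) *: alpha x.
  rewrite scaler_sumr -sumrB; apply: eq_big_seq => x xO.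
  rewrite scalerA -!scaler_suml -scalerBl; congr (_ *: _).
  have e1 : \sum_(y <- Om) c x y * uj x * ui y =
            uj x * piN c x * \sum_(y <- Om) PN c x y * ui y.
    by rewrite mulr_sumr; apply: eq_bigr => y _; rewrite -hP; ring.
  have e2 : \sum_(y <- Om) c x y * ui x * uj y =
            ui x * piN c x * \sum_(y <- Om) PN c x y * uj y.
    by rewrite mulr_sumr; apply: eq_bigr => y _; rewrite -hP; ring.
  have ei' := ei x xO; have ej' := ej x xO.
  rewrite e1 e2.
  have -> : \sum_(y <- Om) PN c x y * ui y = ui x - li * ui x by rewrite ei'; ring.
  have -> : \sum_(y <- Om) PN c x y * uj y = uj x - lj * uj x by rewrite ej'; ring.
  ring.
congr (_ - _); rewrite exchange_big /=; apply: eq_bigr => x _; apply: eq_bigr => y _.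
by rewrite csym; congr (_ *: _); ring.
Qed.

Lemma ipZr {R : realType} {H : normedModType R} {ip : H -> H -> R} :
  inner_product_for ip -> forall a x z, ip z (a *: x) = a * ip z x.
Proof. by move=> hip a x z; case: (hip) => hs _ _; rewrite hs ipZl // hs. Qed.

Lemma ipNl {R : realType} {H : normedModType R} {ip : H -> H -> R} :
  inner_product_for ip -> forall x z, ip (- x) z = - ip x z.
Proof. by move=> hip x z; rewrite -scaleN1r ipZl // mulN1r. Qed.

Lemma ipBr {R : realType} {H : normedModType R} {ip : H -> H -> R} :
  inner_product_for ip -> forall x y z, ip z (x - y) = ip z x - ip z y.
Proof.
move=> hip x y z; case: (hip) => hs _ _.
by rewrite hs ipDl // ipNl // !(hs _ z).
Qed.

Lemma Gsym {R : realType} {V : countType} (c : V -> V -> R) (Om : {fset V})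
  {H : normedModType R} (ip : H -> H -> R) (alpha : V -> H) (u : V -> R) :
  inner_product_for ip ->
  (forall x y, c x y = c y x) ->
  (forall x y, piN c x * PN c x y = c x y) ->
  \sum_(x <- Om) piN c x * ip (betaF c Om alpha u x) (u x *: alpha x) =
  2^-1 * \sum_(x <- Om) \sum_(y <- Om) c x y * u x * u y * `|alpha x - alpha y| ^+ 2.
Proof.
move=> hip csym hP.
set T := \sum_(x <- Om) \sum_(y <- Om) c x y * u x * u y * ip (alpha x - alpha y) (alpha x).
have e1 : \sum_(x <- Om) piN c x * ip (betaF c Om alpha u x) (u x *: alpha x) = T.
  apply: eq_bigr => x _; rewrite /betaF (ip_suml hip) mulr_sumr.
  apply: eq_bigr => y _; rewrite (ipZr hip) -hP; ring.
have e2 : T = \sum_(x <- Om) \sum_(y <- Om) c x y * u x * u y * ip (alpha y - alpha x) (alpha y).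
  rewrite /T exchange_big /=; apply: eq_bigr => x _; apply: eq_bigr => y _.
  by rewrite csym; ring.
have e3 : T + T = \sum_(x <- Om) \sum_(y <- Om) c x y * u x * u y * `|alpha x - alpha y| ^+ 2.
  rewrite {2}e2 /T -big_split; apply: eq_bigr => x _; rewrite -big_split.
  apply: eq_bigr => y _ /=.
  case: (hip) => hs _ hn; rewrite -hn -opprB !(ipNl hip) [ip _ (- _)]hs (ipNl hip) (ipBr hip); ring.
by rewrite e1 -e3; field.
Qed.


Lemma final_ineq (R : realFieldType) (n : nat) (lam : 'I_n -> R)
  (A : 'I_n -> 'I_n -> R) (G N : 'I_n -> R) (k : nat) (hk : (k < n)%N) :
  (forall i j : 'I_n, (i <= j)%N -> lam i <= lam j) ->
  (forall i j, A i j = A j i) -> (forall i j, 0 <= A i j) ->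
  (forall i, G i = \sum_(j < n) (lam j - lam i) * A i j) ->
  (forall i, \sum_(j < n) (lam j - lam i) ^+ 2 * A i j <= N i) ->
  \sum_(i < n | (i < k)%N) (lam (Ordinal hk) - lam i) ^+ 2 * G i <=
  \sum_(i < n | (i < k)%N) (lam (Ordinal hk) - lam i) * N i.
Proof.
move=> hs Asym A0 hG hN; set K := lam (Ordinal hk).
have tpos : forall i : 'I_n, (i < k)%N -> 0 <= K - lam i.
  by move=> i ik; rewrite subr_ge0; apply: hs; rewrite /= ltnW.
apply: (@le_trans _ _ (\sum_(i < n | (i < k)%N) (K - lam i) *
          \sum_(j < n) (lam j - lam i) ^+ 2 * A i j)); last first.
  by apply: ler_sum => i ik; apply: ler_wpM2l; [exact: tpos | exact: hN].
rewrite -subr_le0 -sumrB.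
have e : forall i, (K - lam i) ^+ 2 * G i -
    (K - lam i) * \sum_(j < n) (lam j - lam i) ^+ 2 * A i j =
    \sum_(j < n | (j < k)%N) (K - lam i) * (K - lam j) * (lam j - lam i) * A i j +
    \sum_(j < n | ~~ (j < k)%N) (K - lam i) * (K - lam j) * (lam j - lam i) * A i j.
  move=> i; rewrite hG !mulr_sumr -sumrB (bigID (fun j : 'I_n => (j < k)%N)) /=.
  by congr (_ + _); apply: eq_bigr => j _; ring.
under eq_bigr => i _ do rewrite e.
rewrite big_split /=.
set S := \sum_(i < n | (i < k)%N) \sum_(j < n | (j < k)%N) _.
have S0 : S = 0.
  have : S = - S.
    rewrite {1}/S exchange_big /= /S -sumrN; apply: eq_bigr => j _.
    rewrite -sumrN; apply: eq_bigr => i _; rewrite Asym; ring.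
  lra.
rewrite S0 add0r; apply: sumr_le0 => i ik; apply: sumr_le0 => j jk.
have h1 := tpos i ik.
have h2 : K - lam j <= 0.
  by rewrite subr_le0; apply: hs; rewrite /= leqNgt.
have h3 : 0 <= lam j - lam i.
  rewrite subr_ge0; apply: hs; apply: (leq_trans (ltnW ik)); by rewrite leqNgt.
have h4 := A0 i j.
have : (K - lam i) * (K - lam j) <= 0 by nra.
move=> h5; have : (K - lam i) * (K - lam j) * (lam j - lam i) <= 0 by nra.
nra.
Qed.

Local Close Scope classical_set_scope.
Local Open Scope ring_scope.
Theorem theorem3p2 (R : realType) (V : countType) (c : V -> V -> R)
  (Om : {fset V}) (n : nat)
  (lam : 'I_n -> R) (u : 'I_n -> V -> R)
  (H : completeNormedModType R) (ip : H -> H -> R) (alpha : V -> H)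
  (k : nat) :
  is_network c ->
  #|` Om| = n ->
  (* Dirichlet system for Om *)
  (forall i j : 'I_n, (i <= j)%N -> lam i <= lam j) ->
  (forall i x, x \notin Om -> u i x = 0) ->
  (forall i x, lapD c Om (u i) x = lam i * u i x) ->
  (forall i j, ipi c (u i) (u j) = (i == j)%:R) ->
  (* H is a real Hilbert space *)
  inner_product_for ip ->
  (* Gamma(alpha) is finite on Om (well-definedness of all quantities) *)
  (forall x, x \in Om -> exists s : R,
       hasSum (fun y => c x y * `|alpha x - alpha y| ^+ 2) s) ->
  forall hk : (k < n)%N,
  \sum_(i < n | (i < k)%N)
      (lam (Ordinal hk) - lam i) ^+ 2 *
      (GammaA_u2 c alpha (u i) - Lambda c alpha (u i))
  <=
  \sum_(i < n | (i < k)%N)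
      (lam (Ordinal hk) - lam i) *
      normsq c (fun x => u i x *: lap c alpha x - 2 *: GammaAU c alpha (u i) x).
Proof.
move=> hn hcard hsort huOm heig horth hip hG hk.
have pi0 : forall x, 0 < piN c x by case: hn.
have csym : forall x y, c x y = c y x by case: hn.
have hP : forall x y, piN c x * PN c x y = c x y.
  by move=> x y; rewrite /Defs.P mulrC -mulrA mulVf ?mulr1 // gt_eqF.
have ei : forall i x, x \in Om -> lam i * u i x = u i x - \sum_(y <- Om) PN c x y * u i y.
  move=> i x xO; rewrite -heig /lapD xO; exact: net_lap_fin Om (u i) hn (huOm i) x.
have horth' : forall i j, \sum_(x <- Om) piN c x * u i x * u j x = (i == j)%:R.
  move=> i j; rewrite -horth /ipi (hasSum_vsum (hasSum_fin _ Om _)) //.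
  by move=> x xO; rewrite huOm // mulr0 mul0r.
have hc := complete_basis Om n (piN c) u hcard horth'.
pose a i j := \sum_(x <- Om) (piN c x * u i x * u j x) *: alpha x.
have asym : forall i j, a i j = a j i.
  by move=> i j; apply: eq_bigr => x _; rewrite mulrAC.
have hnorm : forall v, ip v v = `|v| ^+ 2 by case: hip.
have hbij : forall i j, \sum_(x <- Om) (piN c x * u j x) *: betaF c Om alpha (u i) x =
    (lam j - lam i) *: a i j.
  move=> i j; rewrite /a; apply: coefB_net => //; [exact: ei | exact: ei].
have haij : forall i j, \sum_(y <- Om) (piN c y * u j y) *: (u i y *: alpha y) = a i j.
  move=> i j; apply: eq_bigr => y _; rewrite scalerA; congr (_ *: _); ring.
apply: (@final_ineq R n lam (fun i j => ip (a i j) (a i j)) _ _ k hk) => //.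
- by move=> i j; rewrite asym.
- by move=> i j; rewrite hnorm sqr_ge0.
- move=> i.
  rewrite (GammaA_u2_eq Om alpha (u i) hn (huOm i) hG).
  rewrite (Lambda_eq Om alpha (u i) hn (huOm i) hG).
  have -> : 2^-1 * \sum_(x <- Om) u i x ^+ 2 * vsum (fun y => c x y * `|alpha x - alpha y| ^+ 2) -
     4^-1 * \sum_(a <- Om) (2 * (u i a ^+ 2 * vsum (fun y => c a y * `|alpha a - alpha y| ^+ 2)) -
      2 * \sum_(y <- Om) u i a * c a y * u i y * `|alpha a - alpha y| ^+ 2) =
     2^-1 * \sum_(x <- Om) \sum_(y <- Om) c x y * u i x * u i y * `|alpha x - alpha y| ^+ 2.
    rewrite sumrB -!mulr_sumr.
    have -> : \sum_(x <- Om) \sum_(y <- Om) c x y * u i x * u i y * `|alpha x - alpha y| ^+ 2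
       = \sum_(x <- Om) \sum_(y <- Om) u i x * c x y * u i y * `|alpha x - alpha y| ^+ 2.
      by apply: eq_bigr => x _; apply: eq_bigr => y _; ring.
    by field.
  rewrite -(Gsym c Om ip alpha (u i) hip csym hP).
  rewrite (parseval Om n (piN c) u _ _ hip hc).
  apply: eq_bigr => j _; rewrite hbij haij (ipZl hip).
  done.
- move=> i; apply: le_trans (normsq_ge Om alpha (u i) hn (huOm i) hG).
  under [X in _ <= X]eq_bigr => x _ do rewrite -hnorm.
  rewrite (parseval Om n (piN c) u _ _ hip hc).
  apply: ler_sum => j _; rewrite hbij (ipZl hip) (ipZr hip) mulrA -expr2.
  done.
Qed.
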